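(* Let $R$ be a ring. If the factor ring $R/J(R)$ is NJ-symmetric, then $R$ is NJ-symmetric.
   Context: Rings are associative with identity. $N(R)$ is the set of nilpotent elements, $J(R)$ the Jacobson radical. $R$ is NJ-symmetric if for all $a,b,c\in R$, $abc\in N(R)$ implies $bac\in J(R)$. *)

(* Defs.v *)
From HB Require Import structures.
From mathcomp Require Import all_boot all_order all_algebra.
Set Implicit Arguments. Unset Strict Implicit. Unset Printing Implicit Defensive.
Import GRing.Theory.
Local Open Scope ring_scope.

(* Rings: associative with identity, not necessarily commutative
   (pzRingType also allows the zero ring). *)

Definition nilpotent_el (R : pzRingType) (x : R) : Prop := exists n : nat, x ^+ n = 0.

Definition left_ideal (R : pzRingType) (I : R -> Prop) : Prop :=
  [/\ I 0, (forall x y, I x -> I y -> I (x + y)) & (forall r x, I x -> I (r * x))].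

Definition maximal_left_ideal (R : pzRingType) (M : R -> Prop) : Prop :=
  [/\ left_ideal M, ~ M 1 &
      forall K : R -> Prop, left_ideal K -> ~ K 1 -> (forall x, M x -> K x) ->
        forall x, K x -> M x].

Definition jacobson (R : pzRingType) (x : R) : Prop :=
  forall M : R -> Prop, maximal_left_ideal M -> M x.

Definition NJ_symmetric (R : pzRingType) : Prop :=
  forall a b c : R, nilpotent_el (a * b * c) -> jacobson (b * a * c).

(* Main.v *)
Require Import Defs.
From HB Require Import structures.
From mathcomp Require Import all_boot all_order all_algebra.
Local Open Scope ring_scope.
Import GRing.Theory.

Theorem theorem2p14 (R S : pzRingType) (f : {rmorphism R -> S}) :
  (forall y : S, exists x : R, f x = y) ->
  (forall x : R, f x = 0 <-> jacobson x) ->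
  NJ_symmetric S -> NJ_symmetric R.
Proof.
move=> surj ker NJS a b c [n Hn].
have JS0 : forall x : R, jacobson (f x) -> jacobson x.
  move=> x Jx M HM.
  have JM : forall z, f z = 0 -> M z by move=> z /ker Jz; apply: Jz.
  case: HM => [[M0 MD MM] M1 Mmax].
  pose fM := fun y : S => exists m, M m /\ f m = y.
  have fMi : left_ideal fM.
    split.
    - by exists 0; rewrite rmorph0.
    - move=> _ _ [m1 [H1 <-]] [m2 [H2 <-]]; exists (m1 + m2); rewrite rmorphD; split=> //.
      by apply: MD.
    - move=> r _ [m [Hm <-]]; have [r' <-] := surj r.
      by exists (r' * m); rewrite rmorphM; split=> //; apply: MM.
  have fM1 : ~ fM 1.
    move=> [m [Hm Hf]]; apply: M1.
    have H : M (1 - m) by apply: JM; rewrite rmorphB rmorph1 Hf subrr.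
    have := MD _ _ H Hm; by rewrite subrK.
  have fMmax : maximal_left_ideal fM.
    split=> // K [K0 KD KM] K1 sub y Ky.
    have [x' Hx'] := surj y.
    exists x'; split=> //.
    apply: (Mmax (fun z => K (f z))).
    - split; first by rewrite rmorph0.
      + by move=> u v Hu Hv; rewrite rmorphD; apply: KD.
      + by move=> r u Hu; rewrite rmorphM; apply: KM.
    - by rewrite rmorph1.
    - by move=> z Mz; apply: sub; exists z.
    - by rewrite Hx'.
  have [m [Hm Hf]] := Jx _ fMmax.
  have H : M (x - m) by apply: JM; rewrite rmorphB Hf subrr.
  have := MD _ _ H Hm; by rewrite subrK.
apply: JS0; rewrite !rmorphM.
apply: NJS; exists n; by rewrite -!rmorphM -rmorphXn Hn rmorph0.
Qed.
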